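(* Let $|\psi\rangle$ be a normalized pure three-qubit state such that the reduced density matrix of one of its qubits is maximally mixed (equal to $\frac12 I$). Then $G(|\psi\rangle)^2=\frac12$. In particular $G(|\mathrm{GHZ}\rangle)^2=\frac12$ for $|\mathrm{GHZ}\rangle=\frac{1}{\sqrt2}(|000\rangle+|111\rangle)$.
   Context: For a normalized pure three-qubit state, $G(|\psi\rangle):=\max|\langle a|\langle b|\langle c|\psi\rangle|$ over all normalized single-qubit states $|a\rangle,|b\rangle,|c\rangle$. *)

(* Defs.v *)
(* Complex scalars: an arbitrary numClosedFieldType C
   (algebraically closed field with conjugation and norm, e.g. the complex numbers). *)
From HB Require Import structures.
From mathcomp Require Import all_boot all_order all_algebra.
Set Implicit Arguments. Unset Strict Implicit. Unset Printing Implicit Defensive.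
Import Order.TTheory GRing.Theory Num.Theory.
Local Open Scope ring_scope.

Definition qubit (C : numClosedFieldType) := 'I_2 -> C.
Definition qubit3 (C : numClosedFieldType) := 'I_2 -> 'I_2 -> 'I_2 -> C.

Definition normalized1 (C : numClosedFieldType) (a : qubit C) : Prop :=
  \sum_(i < 2) `|a i| ^+ 2 = 1.

Definition normalized3 (C : numClosedFieldType) (psi : qubit3 C) : Prop :=
  \sum_(i < 2) \sum_(j < 2) \sum_(k < 2) `|psi i j k| ^+ 2 = 1.

Definition overlap (C : numClosedFieldType) (a b c : qubit C) (psi : qubit3 C) : C :=
  \sum_(i < 2) \sum_(j < 2) \sum_(k < 2)
     (a i)^* * (b j)^* * (c k)^* * psi i j k.

(* Reduced density matrices of qubits 1, 2, 3 (partial traces of |psi><psi|). *)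
Definition rho1 (C : numClosedFieldType) (psi : qubit3 C) : 'M[C]_2 :=
  \matrix_(i, i') \sum_(j < 2) \sum_(k < 2) psi i j k * (psi i' j k)^*.
Definition rho2 (C : numClosedFieldType) (psi : qubit3 C) : 'M[C]_2 :=
  \matrix_(j, j') \sum_(i < 2) \sum_(k < 2) psi i j k * (psi i j' k)^*.
Definition rho3 (C : numClosedFieldType) (psi : qubit3 C) : 'M[C]_2 :=
  \matrix_(k, k') \sum_(i < 2) \sum_(j < 2) psi i j k * (psi i j k')^*.

Definition maximally_mixed (C : numClosedFieldType) (rho : 'M[C]_2) : Prop :=
  rho = (2%:R)^-1 *: (1%:M).

Definition is_G (C : numClosedFieldType) (psi : qubit3 C) (g : C) : Prop :=
  (exists a b c : qubit C, [/\ normalized1 a, normalized1 b, normalized1 c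
                             & `|overlap a b c psi| = g]) /\
  (forall a b c : qubit C, normalized1 a -> normalized1 b -> normalized1 c ->
                           `|overlap a b c psi| <= g).

Definition ghz (C : numClosedFieldType) : qubit3 C :=
  fun i j k =>
    if ((val i == 0%N) && (val j == 0%N) && (val k == 0%N)) ||
       ((val i == 1%N) && (val j == 1%N) && (val k == 1%N))
    then (sqrtC (2%:R))^-1 else 0.

(* Main.v *)
Require Import Defs.
From HB Require Import structures.
From mathcomp Require Import all_boot all_order all_algebra.
From Stdlib Require Import Ring.
Set Implicit Arguments. Unset Strict Implicit. Unset Printing Implicit Defensive.
Import Order.TTheory GRing.Theory Num.Theory.
Local Open Scope ring_scope.

Definition i0 : 'I_2 := ord0.
Definition i1 : 'I_2 := ord_max.

Lemma ord2 (i : 'I_2) : i = i0 \/ i = i1.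
Proof.
case: i => [[|[|n]] Hn]; [left|right|by []]; by apply: val_inj.
Qed.

Section Main.
Variable C : numClosedFieldType.
Definition cadd (x y : C) : C := x + y.
Definition cmul (x y : C) : C := x * y.
Definition copp (x : C) : C := - x.
Definition csub (x y : C) : C := x - y.
Definition czero : C := 0.
Definition cone : C := 1.
Lemma Cring : @ring_theory C czero cone cadd cmul csub copp eq.
Proof.
rewrite /cadd/cmul/csub/copp/czero/cone.
split=> //; [exact: add0r|exact: addrC|exact: addrA|exact: mul1r|exact: mulrC|exact: mulrA|exact: mulrDl|exact: subrr].
Qed.
Add Ring CR : Cring.
Lemma caddE (x y : C) : x + y = cadd x y. Proof. by []. Qed.
Lemma cmulE (x y : C) : x * y = cmul x y. Proof. by []. Qed.
Lemma coppE (x : C) : - x = copp x. Proof. by []. Qed.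
Lemma czeroE : 0 = czero :> C. Proof. by []. Qed.
Lemma coneE : 1 = cone :> C. Proof. by []. Qed.
Ltac cring := match goal with |- ?a = ?b => change (@eq (Num.ClosedField.sort C) a b) end;
  rewrite ?caddE ?cmulE ?coppE ?czeroE ?coneE; ring.

Lemma cD (x y : C) : (x + y)^* = x^* + y^*. Proof. exact: rmorphD. Qed.
Lemma cM (x y : C) : (x * y)^* = x^* * y^*. Proof. exact: rmorphM. Qed.
Lemma cN (x : C) : (- x)^* = - x^*. Proof. exact: rmorphN. Qed.
Lemma cK (x : C) : x^*^* = x. Proof. exact: conjCK. Qed.
Ltac pushc := repeat progress rewrite ?cD ?cN ?cM ?cK.

Lemma big2 (F : 'I_2 -> C) : \sum_(i < 2) F i = F i0 + F i1.
Proof. rewrite big_ord_recl big_ord1; congr (_ + F _); exact: val_inj. Qed.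

Lemma quad (A B D : C) : exists x0 x1 : C,
  ((x0 != 0) || (x1 != 0)) /\ A * x0 * x0 + B * x0 * x1 + D * x1 * x1 = 0.
Proof.
case: (eqVneq A 0) => [->|hA].
  exists 1, 0; split; first by rewrite oner_eq0.
  cring.
set disc := B * B - (A + A) * (D + D).
set r := sqrtC disc.
have er : r * r = disc by rewrite -expr2 sqrtCK.
exists (r - B), (A + A); split.
  by rewrite -mulr2n mulrn_eq0 /= hA orbT.
transitivity (A * (r * r - disc)); first by rewrite /disc; cring.
by rewrite er subrr mulr0.
Qed.

Lemma CS4 (u1 u2 u3 u4 v1 v2 v3 v4 : C) :
  (u1 * u1^* + u2 * u2^* + u3 * u3^* + u4 * u4^*) *
  (v1 * v1^* + v2 * v2^* + v3 * v3^* + v4 * v4^*) -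
  (u1^* * v1 + u2^* * v2 + u3^* * v3 + u4^* * v4) *
  (u1 * v1^* + u2 * v2^* + u3 * v3^* + u4 * v4^*) =
  (u1^* * v2^* - u2^* * v1^*) * (u1 * v2 - u2 * v1) +
  (u1^* * v3^* - u3^* * v1^*) * (u1 * v3 - u3 * v1) +
  (u1^* * v4^* - u4^* * v1^*) * (u1 * v4 - u4 * v1) +
  (u2^* * v3^* - u3^* * v2^*) * (u2 * v3 - u3 * v2) +
  (u2^* * v4^* - u4^* * v2^*) * (u2 * v4 - u4 * v2) +
  (u3^* * v4^* - u4^* * v3^*) * (u3 * v4 - u4 * v3).
Proof. cring. Qed.

Lemma ge0cc (x : C) : 0 <= x^* * x.
Proof. by rewrite mulrC mul_conjC_ge0. Qed.

Lemma ub_core (h u1 u2 u3 u4 v1 v2 v3 v4 : C) :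
  u1 * u1^* + u2 * u2^* + u3 * u3^* + u4 * u4^* = 1 ->
  v1 * v1^* + v2 * v2^* + v3 * v3^* + v4 * v4^* = h ->
  (u1^* * v1 + u2^* * v2 + u3^* * v3 + u4^* * v4) *
  (u1^* * v1 + u2^* * v2 + u3^* * v3 + u4^* * v4)^* <= h.
Proof.
move=> hu hv.
have E := CS4 u1 u2 u3 u4 v1 v2 v3 v4.
rewrite hu hv mul1r in E.
have -> : (u1^* * v1 + u2^* * v2 + u3^* * v3 + u4^* * v4)^* =
   u1 * v1^* + u2 * v2^* + u3 * v3^* + u4 * v4^* by pushc.
set W := (X in _ = X) in E.
have -> : (u1^* * v1 + u2^* * v2 + u3^* * v3 + u4^* * v4) *
  (u1 * v1^* + u2 * v2^* + u3 * v3^* + u4 * v4^*) = h - W.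
  by rewrite -E; cring.
rewrite gerBl /W.
have P : forall x y z w : C, 0 <= (x^* * y^* - z^* * w^*) * (x * y - z * w).
  move=> x y z w.
  have -> : x^* * y^* - z^* * w^* = (x * y - z * w)^* by pushc.
  exact: ge0cc.
by rewrite !addr_ge0.
Qed.

Definition Rr (psi : qubit3 C) (i i' : 'I_2) : C :=
  psi i i0 i0 * (psi i' i0 i0)^* + psi i i0 i1 * (psi i' i0 i1)^* +
  psi i i1 i0 * (psi i' i1 i0)^* + psi i i1 i1 * (psi i' i1 i1)^*.
Definition vv (psi : qubit3 C) (a0 a1 : C) (j k : 'I_2) : C :=
  a0^* * psi i0 j k + a1^* * psi i1 j k.

Lemma S_eq (psi : qubit3 C) (a0 a1 : C) :
  vv psi a0 a1 i0 i0 * (vv psi a0 a1 i0 i0)^* + vv psi a0 a1 i0 i1 * (vv psi a0 a1 i0 i1)^* +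
  vv psi a0 a1 i1 i0 * (vv psi a0 a1 i1 i0)^* + vv psi a0 a1 i1 i1 * (vv psi a0 a1 i1 i1)^* =
  a0^* * a0 * Rr psi i0 i0 + a0^* * a1 * Rr psi i0 i1 + a1^* * a0 * Rr psi i1 i0 +
  a1^* * a1 * Rr psi i1 i1.
Proof. rewrite /vv /Rr; pushc; cring. Qed.

Lemma norm1E (a : qubit C) : normalized1 a -> a i0 * (a i0)^* + a i1 * (a i1)^* = 1.
Proof. by rewrite /normalized1 big2 !normCK. Qed.

Lemma ub (psi : qubit3 C) (h : C) (a b c : qubit C) :
  Rr psi i0 i0 = h -> Rr psi i1 i1 = h -> Rr psi i0 i1 = 0 -> Rr psi i1 i0 = 0 ->
  normalized1 a -> normalized1 b -> normalized1 c ->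
  overlap a b c psi * (overlap a b c psi)^* <= h.
Proof.
move=> R00 R11 R01 R10 /norm1E na /norm1E nb /norm1E nc.
have -> : overlap a b c psi =
  (b i0 * c i0)^* * vv psi (a i0) (a i1) i0 i0 + (b i0 * c i1)^* * vv psi (a i0) (a i1) i0 i1 +
  (b i1 * c i0)^* * vv psi (a i0) (a i1) i1 i0 + (b i1 * c i1)^* * vv psi (a i0) (a i1) i1 i1.
  rewrite /overlap !big2 /vv; pushc; cring.
apply: ub_core.
  pushc.
  transitivity ((b i0 * (b i0)^* + b i1 * (b i1)^*) * (c i0 * (c i0)^* + c i1 * (c i1)^*)).
    cring.
  by rewrite nb nc mul1r.
rewrite S_eq R00 R11 R01 R10.
transitivity (h * (a i0 * (a i0)^* + a i1 * (a i1)^*)); first cring.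
by rewrite na mulr1.
Qed.

Lemma inv_sqrt (X : C) : 0 <= X -> X != 0 -> exists s : C, s^* = s /\ s * s * X = 1.
Proof.
move=> hX hX0; exists (sqrtC X)^-1; split.
  by apply: geC0_conj; rewrite invr_ge0 sqrtC_ge0.
by rewrite -expr2 exprVn sqrtCK mulVf.
Qed.

Definition ovm (b0 b1 c0 c1 m00 m01 m10 m11 : C) : C :=
  b0^* * c0^* * m00 + b0^* * c1^* * m01 + b1^* * c0^* * m10 + b1^* * c1^* * m11.

Lemma rank1_row0 (h m00 m01 m10 m11 : C) :
  m00 * m11 - m01 * m10 = 0 ->
  m00 * m00^* + m01 * m01^* + m10 * m10^* + m11 * m11^* = h ->
  m00 * m00^* + m01 * m01^* != 0 -> h != 0 ->
  exists b0 b1 c0 c1 : C, [/\ b0 * b0^* + b1 * b1^* = 1, c0 * c0^* + c1 * c1^* = 1 &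
    ovm b0 b1 c0 c1 m00 m01 m10 m11 * (ovm b0 b1 c0 c1 m00 m01 m10 m11)^* = h].
Proof.
move=> hdet hn hQ hh.
have [Q eQ] : exists Q, Q = m00 * m00^* + m01 * m01^* by eexists.
have [P1 eP1] : exists P1, P1 = m10 * m00^* + m11 * m01^* by eexists.
have Qge : 0 <= Q by rewrite eQ addr_ge0 ?mul_conjC_ge0.
have Qc : Q^* = Q by exact: geC0_conj.
rewrite -eQ in hQ.
have eNP : Q * Q + P1 * P1^* = h * Q.
  have e1 : P1 * P1^* = Q * (m10 * m10^* + m11 * m11^*) -
      (m00 * m11 - m01 * m10) * (m00 * m11 - m01 * m10)^*.
    rewrite eP1 eQ; pushc; cring.
  rewrite e1 hdet mul0r subr0 -hn eQ; cring.
have NPge : 0 <= Q * Q + P1 * P1^* by apply: addr_ge0; [exact: mulr_ge0 | exact: mul_conjC_ge0].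
have NPnz : Q * Q + P1 * P1^* != 0 by rewrite eNP mulf_neq0.
have [sp [spc hsp]] := inv_sqrt NPge NPnz.
have [sq [sqc hsq]] := inv_sqrt Qge hQ.
exists (Q * sp), (P1 * sp), (m00 * sq), (m01 * sq); split.
- pushc; rewrite spc Qc.
  transitivity (sp * sp * (Q * Q + P1 * P1^*)); [cring | exact hsp].
- pushc; rewrite sqc.
  transitivity (sq * sq * Q); [rewrite eQ; cring | exact hsq].
- have eov : ovm (Q * sp) (P1 * sp) (m00 * sq) (m01 * sq) m00 m01 m10 m11 =
     sp * sq * (Q * Q + P1 * P1^*).
    rewrite /ovm; pushc; rewrite spc sqc Qc eP1; pushc; rewrite eQ; cring.
  rewrite eov; pushc; rewrite spc sqc Qc.
  transitivity ((sp * sp * (Q * Q + P1 * P1^*)) * (sq * sq * (Q * Q + P1 * P1^*))).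
    cring.
  rewrite hsp mul1r eNP.
  transitivity (sq * sq * Q * h); first cring.
  by rewrite hsq mul1r.
Qed.

Lemma rank1 (h m00 m01 m10 m11 : C) :
  m00 * m11 - m01 * m10 = 0 ->
  m00 * m00^* + m01 * m01^* + m10 * m10^* + m11 * m11^* = h ->
  h != 0 ->
  exists b0 b1 c0 c1 : C, [/\ b0 * b0^* + b1 * b1^* = 1, c0 * c0^* + c1 * c1^* = 1 &
    ovm b0 b1 c0 c1 m00 m01 m10 m11 * (ovm b0 b1 c0 c1 m00 m01 m10 m11)^* = h].
Proof.
move=> hdet hn hh.
case: (eqVneq (m00 * m00^* + m01 * m01^*) 0) => hQ; last exact: rank1_row0.
have hQ' : m10 * m10^* + m11 * m11^* != 0.
  apply: contraNneq hh => e.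
  have -> : h = (m00 * m00^* + m01 * m01^*) + (m10 * m10^* + m11 * m11^*) by rewrite -hn; cring.
  by rewrite hQ e addr0.
have hdet' : m10 * m01 - m11 * m00 = 0.
  transitivity (- (m00 * m11 - m01 * m10)); first cring.
  by rewrite hdet oppr0.
have hn' : m10 * m10^* + m11 * m11^* + m00 * m00^* + m01 * m01^* = h by rewrite -hn; cring.
have [b0 [b1 [c0 [c1 [nb nc ho]]]]] := rank1_row0 hdet' hn' hQ' hh.
exists b1, b0, c0, c1; split => //; first by rewrite addrC.
have -> : ovm b1 b0 c0 c1 m00 m01 m10 m11 = ovm b0 b1 c0 c1 m10 m11 m00 m01 by rewrite /ovm; cring.
exact: ho.
Qed.


Definition mkq (u v : C) : qubit C := fun i => if val i == 0%N then u else v.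
Lemma mkq0 u v : mkq u v i0 = u. Proof. by []. Qed.
Lemma mkq1 u v : mkq u v i1 = v. Proof. by []. Qed.
Lemma nmkq u v : u * u^* + v * v^* = 1 -> normalized1 (mkq u v).
Proof. by rewrite /normalized1 big2 !normCK mkq0 mkq1. Qed.

Lemma i01 : (i0 == i1) = false. Proof. by []. Qed.
Lemma i10 : (i1 == i0) = false. Proof. by []. Qed.

Lemma core (psi : qubit3 C) :
  maximally_mixed (rho1 psi) -> is_G psi (sqrtC (2%:R)^-1).
Proof.
move=> mm.
have hR : forall i i', Rr psi i i' = (2%:R)^-1 * (i == i')%:R.
  move=> i i'; rewrite /Rr; have := congr1 (fun M : 'M[C]_2 => M i i') mm.
  by rewrite /= !mxE !big2 !addrA => ->.
have R00 := hR i0 i0; have R11 := hR i1 i1; have R01 := hR i0 i1; have R10 := hR i1 i0.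
rewrite eqxx mulr1 in R00; rewrite eqxx mulr1 in R11.
rewrite i01 mulr0 in R01; rewrite i10 mulr0 in R10.
have hh : (2%:R)^-1 != 0 :> C by rewrite invr_eq0 pnatr_eq0.
split; last first.
  move=> a b c na nb nc.
  rewrite -(sqrCK (normr_ge0 _)) normCK ler_sqrtC; first exact: ub.
    by rewrite nnegrE mul_conjC_ge0.
  by rewrite nnegrE invr_ge0 ler0n.
have [x0 [x1 [hx hq]]] := quad
  (psi i0 i0 i0 * psi i0 i1 i1 - psi i0 i0 i1 * psi i0 i1 i0)
  (psi i0 i0 i0 * psi i1 i1 i1 + psi i1 i0 i0 * psi i0 i1 i1
    - psi i0 i0 i1 * psi i1 i1 i0 - psi i1 i0 i1 * psi i0 i1 i0)
  (psi i1 i0 i0 * psi i1 i1 i1 - psi i1 i0 i1 * psi i1 i1 i0).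
have Nge : 0 <= x0 * x0^* + x1 * x1^* by apply: addr_ge0; exact: mul_conjC_ge0.
have Nnz : x0 * x0^* + x1 * x1^* != 0.
  by rewrite paddr_eq0 ?mul_conjC_ge0 // !mul_conjC_eq0 negb_and.
have [ni [nic hni]] := inv_sqrt Nge Nnz.
have hdet : ((x0^* * ni)^* * psi i0 i0 i0 + (x1^* * ni)^* * psi i1 i0 i0) *
            ((x0^* * ni)^* * psi i0 i1 i1 + (x1^* * ni)^* * psi i1 i1 i1) -
            ((x0^* * ni)^* * psi i0 i0 i1 + (x1^* * ni)^* * psi i1 i0 i1) *
            ((x0^* * ni)^* * psi i0 i1 i0 + (x1^* * ni)^* * psi i1 i1 i0) = 0.
  pushc; rewrite nic.
  transitivity (ni * ni * (
   (psi i0 i0 i0 * psi i0 i1 i1 - psi i0 i0 i1 * psi i0 i1 i0) * x0 * x0 +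
   (psi i0 i0 i0 * psi i1 i1 i1 + psi i1 i0 i0 * psi i0 i1 i1
    - psi i0 i0 i1 * psi i1 i1 i0 - psi i1 i0 i1 * psi i0 i1 i0) * x0 * x1 +
   (psi i1 i0 i0 * psi i1 i1 i1 - psi i1 i0 i1 * psi i1 i1 i0) * x1 * x1)).
    cring.
  by rewrite hq mulr0.
have hsum := S_eq psi (x0^* * ni) (x1^* * ni).
rewrite R00 R11 R01 R10 /vv in hsum.
have hsum' : (x0^* * ni) ^* * (x0^* * ni) * (2%:R)^-1 + (x0^* * ni)^* * (x1^* * ni) * 0 +
   (x1^* * ni)^* * (x0^* * ni) * 0 + (x1^* * ni)^* * (x1^* * ni) * (2%:R)^-1 = (2%:R)^-1 :> C.
  pushc; rewrite nic.
  transitivity ((2%:R)^-1 * (ni * ni * (x0 * x0^* + x1 * x1^*))); first cring.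
  by rewrite hni mulr1.
have [b0 [b1 [c0 [c1 [nb nc ho]]]]] := rank1 hdet (etrans hsum hsum') hh.
exists (mkq (x0^* * ni) (x1^* * ni)), (mkq b0 b1), (mkq c0 c1); split.
- apply: nmkq; pushc; rewrite nic.
  transitivity (ni * ni * (x0 * x0^* + x1 * x1^*)); [cring | exact: hni].
- exact: nmkq.
- exact: nmkq.
- rewrite -(sqrCK (normr_ge0 _)) normCK; congr sqrtC.
  rewrite -[RHS]ho; congr (_ * _ ^*); rewrite /overlap !big2 !mkq0 !mkq1 /ovm; cring.
Qed.


Definition sw12 (psi : qubit3 C) : qubit3 C := fun i j k => psi j i k.
Definition sw3 (psi : qubit3 C) : qubit3 C := fun i j k => psi j k i.
Lemma rho1_sw12 psi : rho1 (sw12 psi) = rho2 psi. Proof. by []. Qed.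
Lemma rho1_sw3 psi : rho1 (sw3 psi) = rho3 psi. Proof. by []. Qed.
Lemma ov12 a b c psi : overlap a b c (sw12 psi) = overlap b a c psi.
Proof. rewrite /overlap !big2 /sw12; cring. Qed.
Lemma ov3 a b c psi : overlap a b c (sw3 psi) = overlap b c a psi.
Proof. rewrite /overlap !big2 /sw3; cring. Qed.
Lemma isG12 psi g : is_G (sw12 psi) g -> is_G psi g.
Proof.
case=> [[a [b [c [na nb nc e]]]] H]; split.
  by exists b, a, c; split => //; rewrite -ov12.
by move=> a' b' c' na' nb' nc'; rewrite -ov12; apply: H.
Qed.
Lemma isG3 psi g : is_G (sw3 psi) g -> is_G psi g.
Proof.
case=> [[a [b [c [na nb nc e]]]] H]; split.
  by exists b, c, a; split => //; rewrite -ov3.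
move=> a' b' c' na' nb' nc'.
have -> : overlap a' b' c' psi = overlap c' a' b' (sw3 psi) by rewrite ov3.
exact: H.
Qed.

Lemma ghz_mm : maximally_mixed (rho1 (ghz C)).
Proof.
have sc : ((sqrtC (2%:R : C))^-1)^* = (sqrtC 2%:R)^-1.
  by apply: geC0_conj; rewrite invr_ge0 sqrtC_ge0 ler0n.
have ss : (sqrtC (2%:R : C))^-1 * (sqrtC 2%:R)^-1 = 2%:R^-1.
  by rewrite -expr2 exprVn sqrtCK.
apply/matrixP => i i'; rewrite !mxE !big2.
case: (ord2 i) => ->; case: (ord2 i') => ->;
  rewrite /ghz /i0 /i1 /= ?conjC0 ?sc ?mulr0 ?mul0r ?add0r ?addr0 ?mulr1 ?ss //.
Qed.

End Main.

Theorem mainTheorem5 :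
  (forall (C : numClosedFieldType) (psi : qubit3 C),
     normalized3 psi ->
     (maximally_mixed (rho1 psi) \/ maximally_mixed (rho2 psi) \/
      maximally_mixed (rho3 psi)) ->
     exists g : C, is_G psi g /\ g ^+ 2 = (2%:R)^-1) /\
  (forall C : numClosedFieldType,
     exists g : C, is_G (ghz C) g /\ g ^+ 2 = (2%:R)^-1).
Proof.
split.
  move=> C psi _ H; exists (sqrtC (2%:R)^-1); split; last exact: sqrtCK.
  case: H => [H|[H|H]].
  - exact: core.
  - by apply: isG12; apply: core; rewrite rho1_sw12.
  - by apply: isG3; apply: core; rewrite rho1_sw3.
move=> C; exists (sqrtC (2%:R)^-1); split; last exact: sqrtCK.
exact: core (ghz_mm C).
Qed.
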